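(* Let $K$ be a compactum and $U_1,U_2\subset K$ disjoint open sets such that $K\setminus(U_1\cup U_2)$ has at most finitely many components intersecting both $\partial U_1$ and $\partial U_2$, say $n$ of them. Then for any open sets $W_1\subset U_1$ and $W_2\subset U_2$, the set $K\setminus(W_1\cup W_2)$ has at most $n$ components intersecting both $\partial W_1$ and $\partial W_2$.
   Context: A compactum is a compact metric space; boundaries are taken relative to $K$. *)

(* Defs.v *)
From HB Require Import structures.
From mathcomp Require Import all_boot all_order all_algebra.
From mathcomp Require Import all_classical all_reals all_analysis.
Set Implicit Arguments. Unset Strict Implicit. Unset Printing Implicit Defensive.
Import Order.TTheory GRing.Theory Num.Theory.
Local Open Scope classical_set_scope.

(* Boundary of a set in the ambient space (the compactum is the whole type). *)
Definition boundary {T : topologicalType} (U : set T) : set T :=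
  closure U `\` interior U.

Definition components {T : topologicalType} (A : set T) : set (set T) :=
  [set C | exists2 x, A x & C = connected_component A x].

Definition bridging_components {T : topologicalType} (A U1 U2 : set T)
  : set (set T) :=
  [set C | components A C /\ (C `&` boundary U1 !=set0) /\
           (C `&` boundary U2 !=set0)].

(* Main.v *)
Require Import Defs.
From HB Require Import structures.
From mathcomp Require Import all_boot all_order all_algebra.
From mathcomp Require Import all_classical all_reals all_analysis.
From mathcomp Require Import finmap.
Set Implicit Arguments. Unset Strict Implicit. Unset Printing Implicit Defensive.
Local Open Scope card_scope.
Local Open Scope classical_set_scope.

Definition pT (T : topologicalType) (x : T) : Type := T.
HB.instance Definition _ (T : topologicalType) (x : T) := Topological.copy (pT x) T.
HB.instance Definition _ (T : topologicalType) (x : T) := isPointed.Build (pT x) x.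

Lemma cover_cpt (T : topologicalType) (A : set T) : compact A -> cover_compact A.
Proof.
move=> cA.
have [[x Ax]|A0] := pselect (A !=set0).
  have := @compact_cover (pT x) => /(congr1 (fun f => f A)) E.
  have : @compact (pT x) A by exact: cA.
  by rewrite E.
move=> I D f _ _; exists fset0 => // y Ay; exfalso; apply: A0; by exists y.
Qed.

Section S.
Context (T : topologicalType) (hT : hausdorff_space T) (cT : compact [set: T]).

Lemma closed_cpt (A : set T) : closed A -> compact A.
Proof. by move=> cA; apply: (subclosed_compact cA cT). Qed.

Lemma fin_closed_fam (I : choiceType) (D : set I) (f : I -> set T) (B : set T) :
  closed B -> (forall i, D i -> closed (f i)) ->
  B `&` \bigcap_(i in D) f i = set0 ->
  exists2 D' : {fset I}, {subset D' <= D} &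
    B `&` \bigcap_(i in [set` D']) f i = set0.
Proof.
move=> cB cf H.
have cov : B `<=` \bigcup_(i in D) (~` f i).
  move=> x Bx; apply: contrapT => nx.
  have : (B `&` \bigcap_(i in D) f i) x.
    split => // i Di; apply: contrapT => nfi; apply: nx; by exists i.
  by rewrite H.
have [D' sD' cov'] := cover_cpt (closed_cpt cB) (fun i Di => closed_openC (cf i Di)) cov.
exists D' => //; apply/seteqP; split => // x [Bx Hx].
have [i Di nfi] := cov' x Bx.
by apply: nfi; apply: Hx.
Qed.

Lemma separate_closed (A B : set T) : closed A -> closed B -> A `&` B = set0 ->
  exists U V : set T, [/\ open U, open V, A `<=` U, B `<=` V & U `&` V = set0].
Proof.
move=> cA cB AB.
have nT := compact_normal hT cT.
have : set_nbhs A (~` B).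
  apply/set_nbhsP; exists (~` B); split => //; first exact: closed_openC.
  move=> x Ax Bx; have : (A `&` B) x by []. by rewrite AB.
move=> /(nT A cA) [W /set_nbhsP [G [oG AG GW]] clW].
exists G, (~` closure W); split => //.
- exact/closed_openC/closed_closure.
- move=> x Bx clx; exact: (clW x clx Bx).
- apply/seteqP; split => // x [Ox]; apply; apply: subset_closure; exact: GW.
Qed.


Definition relclopen (F Z : set T) := [/\ Z `<=` F, closed Z & closed (F `\` Z)].

Lemma relclopenF F : closed F -> relclopen F F.
Proof. by move=> cF; split => //; rewrite setDv; exact: closed0. Qed.

Lemma relclopen_fin_cap (F : set T) (D' : {fset set T}) :
  closed F -> (forall Z, Z \in D' -> relclopen F Z) ->
  relclopen F (F `&` \bigcap_(Z in [set` D']) Z).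
Proof.
move=> cF H; split.
- by move=> x [].
- apply: closedI => //; apply: closed_bigI => Z DZ; have [] := H Z DZ; done.
- rewrite (_ : _ `\` _ = \bigcup_(Z in [set` D']) (F `\` Z)).
    apply: closed_bigcup; first exact: finite_fset.
    by move=> Z DZ; have [] := H Z DZ.
  apply/seteqP; split => x.
    move=> [Fx] /not_andP [//|/existsNP [Z /not_implyP [DZ nZx]]].
    by exists Z.
  by move=> [Z DZ [Fx nZx]]; split => // -[_ /(_ Z DZ)].
Qed.

Lemma relclopen_fin_cup (F : set T) (D' : {fset set T}) :
  closed F -> (forall Z, Z \in D' -> relclopen F Z) ->
  relclopen F (\bigcup_(Z in [set` D']) Z).
Proof.
move=> cF H; split.
- by move=> x [Z DZ Zx]; have [+ _ _] := H Z DZ; apply.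
- apply: closed_bigcup; first exact: finite_fset.
  by move=> Z DZ; have [] := H Z DZ.
- rewrite (_ : _ `\` _ = F `&` \bigcap_(Z in [set` D']) (F `\` Z)).
    apply: closedI => //; apply: closed_bigI => Z DZ; by have [] := H Z DZ.
  apply/seteqP; split => x.
    by move=> [Fx nx]; split => // Z DZ; split => // Zx; apply: nx; exists Z.
  by move=> [Fx Hx]; split => // -[Z DZ Zx]; have [] := Hx Z DZ.
Qed.

Definition qc (F : set T) (x : T) :=
  \bigcap_(Z in [set Z | relclopen F Z /\ Z x]) Z.

Lemma qc_closed F x : closed (qc F x).
Proof. by apply: closed_bigI => Z [[]]. Qed.

Lemma qc_sub F x : closed F -> F x -> qc F x `<=` F.
Proof. by move=> cF Fx y; apply; split => //; exact: relclopenF. Qed.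

Lemma qc_refl F x : qc F x x.
Proof. by move=> Z []. Qed.


Lemma qc_nosplit F x (A0 A1 : set T) : closed F -> F x -> closed A0 -> closed A1 ->
  A0 `&` A1 = set0 -> qc F x = A0 `|` A1 -> A0 x -> A1 = set0.
Proof.
move=> cF Fx cA0 cA1 A01 qE A0x.
have [U [V [oU oV A0U A1V UV]]] := separate_closed cA0 cA1 A01.
have cB : closed (~` (U `|` V)) by apply: open_closedC; apply: openU.
have H0 : ~` (U `|` V) `&` \bigcap_(Z in [set Z | relclopen F Z /\ Z x]) id Z = set0.
  apply/seteqP; split => // z [nz qz].
  apply: nz; have : qc F x z by [].
  by rewrite qE => -[/A0U|/A1V]; [left|right].
have [D' sD' HD'] := @fin_closed_fam (set T)
  [set Z | relclopen F Z /\ Z x] id (~` (U `|` V)) cB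
  (fun Z DZ => let: And3 _ h _ := DZ.1 in h) H0.
set S := F `&` \bigcap_(Z in [set` D']) Z.
  have inD Z : Z \in D' -> relclopen F Z /\ Z x.
    by move=> /sD'; rewrite in_setE.
  have rS : relclopen F S by apply: relclopen_fin_cap => // Z /inD [].
  have SUV : S `<=` U `|` V.
    move=> z [Fz Hz]; apply: contrapT => nz.
    have : (~` (U `|` V) `&` \bigcap_(i in [set` D']) id i) z by [].
    by rewrite HD'.
  have rSU : relclopen F (S `&` U).
    have [SF cS cFS] := rS.
    split.
    - by move=> z [/SF].
    - rewrite (_ : S `&` U = S `&` ~` V); first by apply: closedI => //; exact: open_closedC.
      apply/seteqP; split => z [Sz].
        by move=> Uz; split => // Vz; have : (U `&` V) z by []; rewrite UV.
      by move=> nVz; split => //; have [] := SUV z Sz.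
    - rewrite (_ : F `\` (S `&` U) = (F `\` S) `|` (S `&` ~` U)).
        by apply: closedU => //; apply: closedI => //; exact: open_closedC.
      apply/seteqP; split => z.
        move=> [Fz nSU]; have [Sz|nSz] := pselect (S z); last by left.
        by right; split => // Uz; exact: nSU.
      move=> [[Fz nSz]|[Sz nUz]]; first by split => // -[].
      by split; [exact: SF | case].
  have SUx : (S `&` U) x.
    split; last exact: A0U.
    by split => // Z /inD [].
  apply/seteqP; split => // z A1z.
  have : qc F x z by rewrite qE; right.
  move=> /(_ (S `&` U) (conj rSU SUx)) [_ Uz].
  have : (U `&` V) z by split => //; exact: A1V.
  by rewrite UV.
Qed.


Lemma qc_connected F x : closed F -> F x -> connected (qc F x).
Proof.
move=> cF Fx; apply/connectedP => E [E0 qE [s1 s2]].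
have cl0 : closed (E false).
  move=> z cz; have : qc F x z.
    by apply: qc_closed; apply: (closureS _ cz); rewrite qE; left.
  rewrite qE => -[//|E1z]; exfalso.
  by have : (closure (E false) `&` E true) z by []; rewrite s1.
have cl1 : closed (E true).
  move=> z cz; have : qc F x z.
    by apply: qc_closed; apply: (closureS _ cz); rewrite qE; right.
  rewrite qE => -[E0z|//]; exfalso.
  by have : (E false `&` closure (E true)) z by []; rewrite s2.
have Ed : E false `&` E true = set0 by apply: separated_disjoint; split.
have := @qc_refl F x; rewrite qE => -[x0|x1].
- have := qc_nosplit cF Fx cl0 cl1 Ed qE x0 => E1.
  by case: (E0 true) => y; rewrite E1.
- have := qc_nosplit cF Fx cl1 cl0 (ltac:(by rewrite setIC)) (ltac:(by rewrite setUC)) x1 => E1.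
  by case: (E0 false) => y; rewrite E1.
Qed.

Lemma cutwire F P Q : closed F -> closed P -> closed Q -> P `<=` F ->
  (forall C, C `<=` F -> connected C -> C `&` P !=set0 -> C `&` Q !=set0 -> False) ->
  exists Y, [/\ relclopen F Y, P `<=` Y & Y `&` Q = set0].
Proof.
move=> cF cP cQ PF H.
have Hp p : P p -> exists Z, [/\ relclopen F Z, Z p & Z `&` Q = set0].
  move=> Pp; have Fp := PF p Pp.
  have H0 : Q `&` \bigcap_(Z in [set Z | relclopen F Z /\ Z p]) id Z = set0.
    apply/seteqP; split => // z [Qz qz].
    apply: (H (qc F p)); first exact: qc_sub.
    - exact: qc_connected.
    - by exists p; split => //; exact: qc_refl.
    - by exists z.
  have [D' sD' HD'] := @fin_closed_fam (set T)
    [set Z | relclopen F Z /\ Z p] id Q cQ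
    (fun Z DZ => let: And3 _ h _ := DZ.1 in h) H0.
  have inD Z : Z \in D' -> relclopen F Z /\ Z p.
    by move=> /sD'; rewrite in_setE.
  exists (F `&` \bigcap_(Z in [set` D']) Z); split.
  - by apply: relclopen_fin_cap => // Z /inD [].
  - by split => // Z /inD [].
  - apply/seteqP; split => // z [[Fz Hz] Qz].
    by have : (Q `&` \bigcap_(i in [set` D']) id i) z by []; rewrite HD'.
have cov : P `<=` \bigcup_(Z in [set Z | relclopen F Z /\ Z `&` Q = set0]) (~` (F `\` Z)).
  move=> p Pp; have [Z [rZ Zp ZQ]] := Hp p Pp.
  by exists Z => // -[].
have op : forall Z, [set Z | relclopen F Z /\ Z `&` Q = set0] Z -> open (~` (F `\` Z)).
  by move=> Z [[_ _ h] _]; exact: closed_openC.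
have [D'' sD'' cov'] := cover_cpt (closed_cpt cP) op cov.
have inD Z : Z \in D'' -> relclopen F Z /\ Z `&` Q = set0.
  by move=> /sD''; rewrite in_setE.
exists (\bigcup_(Z in [set` D'']) Z); split.
- by apply: relclopen_fin_cup => // Z /inD [].
- move=> p Pp; have [Z DZ nZ] := cov' p Pp.
  exists Z => //; apply: contrapT => nZp; apply: nZ; split => //; exact: PF.
- apply/seteqP; split => // z [[Z DZ Zz] Qz].
  have [_ ZQ] := inD Z DZ.
  by have : (Z `&` Q) z by []; rewrite ZQ.
Qed.


Lemma closure_disj (U1 U2 : set T) : open U1 -> U1 `&` U2 = set0 ->
  U1 `&` closure U2 = set0.
Proof.
move=> oU1 U12; apply/seteqP; split => // z [U1z cz].
have sub : U2 `<=` ~` U1.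
  by move=> y U2y U1y; have : (U1 `&` U2) y by []; rewrite U12.
by have := open_closedC oU1 (closureS sub cz); apply.
Qed.

Lemma closed_separated (A B : set T) : closed A -> closed B -> A `&` B = set0 ->
  separated A B.
Proof.
move=> cA cB AB; split.
- by rewrite -(proj1 (closure_id A) cA).
- by rewrite -(proj1 (closure_id B) cB).
Qed.

Lemma bridge_sub (U1 U2 W1 W2 C : set T) : open U1 -> open U2 ->
  U1 `&` U2 = set0 -> open W1 -> open W2 -> W1 `<=` U1 -> W2 `<=` U2 ->
  bridging_components (~` (W1 `|` W2)) W1 W2 C ->
  exists D, bridging_components (~` (U1 `|` U2)) U1 U2 D /\ D `<=` C.
Proof.
move=> oU1 oU2 U12 oW1 oW2 WU1 WU2 [[x Kx CE] [[a [Ca ba]] [b [Cb bb]]]].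
set K' := ~` (W1 `|` W2).
have cK' : closed K' by apply: open_closedC; apply: openU.
have cC : closed C by rewrite CE; exact: component_closed.
have conC : connected C by rewrite CE; exact: component_connected.
set K := ~` (U1 `|` U2).
have cK : closed K by apply: open_closedC; apply: openU.
have KK' : K `<=` K'.
  by move=> z Kz [/WU1 U1z|/WU2 U2z]; apply: Kz; [left|right].
set F := C `&` K.
have cF : closed F by apply: closedI.
set P := F `&` closure U1.
set Q := F `&` closure U2.
have cP : closed P by apply: closedI => //; exact: closed_closure.
have cQ : closed Q by apply: closedI => //; exact: closed_closure.
have cla : closure U1 a by case: ba => cwa _; exact: (closureS WU1).
have clb : closure U2 b by case: bb => cwb _; exact: (closureS WU2).
have U1c2 := closure_disj oU1 U12.
have U2c1 : U2 `&` closure U1 = set0 by apply: closure_disj => //; rewrite setIC.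
have intU1 : interior U1 = U1 by apply/interior_id.
have intU2 : interior U2 = U2 by apply/interior_id.
have [D0 [D0F conD0 [z [D0z Pz]] [w [D0w Qw]]]] :
    exists D0, [/\ D0 `<=` F, connected D0, D0 `&` P !=set0 & D0 `&` Q !=set0].
  apply: contrapT => nD.
  have H : forall D0, D0 `<=` F -> connected D0 -> D0 `&` P !=set0 ->
      D0 `&` Q !=set0 -> False.
    by move=> D0 h1 h2 h3 h4; apply: nD; exists D0; split.
  have [[z [Pz Qz]] | PQ0] := pselect (P `&` Q !=set0).
    apply: (H [set z]); [by move=> _ ->; case: Pz | exact: connected1 |
      by exists z | by exists z].
  have PQ : P `&` Q = set0.
    by apply/seteqP; split => // z Hz; apply: PQ0; exists z.
  have [Y [[YF cY cFY] PY YQ]] := cutwire cF cP cQ (fun z (h : P z) => h.1) H.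
  move: conC => /connectedP /(_ (fun bb => if bb then (C `&` closure U2) `|` (F `\` Y)
                                          else (C `&` closure U1) `|` Y)); apply; split.
  - case.
    + by exists b; left.
    + by exists a; left.
  - apply/seteqP; split => z.
      move=> Cz; have [U1z|nU1z] := pselect (U1 z).
        by left; left; split => //; exact: subset_closure.
      have [U2z|nU2z] := pselect (U2 z).
        by right; left; split => //; exact: subset_closure.
      have Fz : F z by split => // -[].
      have [Yz|nYz] := pselect (Y z); first by left; right.
      by right; right.
    by move=> [[[Cz _]|/YF [Cz _]]|[[Cz _]|[[Cz _] _]]].
  - apply: closed_separated.
    + by apply: closedU => //; apply: closedI => //; exact: closed_closure.
    + by apply: closedU => //; apply: closedI => //; exact: closed_closure.
    apply/seteqP; split => // y [[[Cy c1y]|Yy] [[Cy' c2y]|[Fy nYy]]].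
    + have nU1 : ~ U1 y by move=> U1y; have : (U1 `&` closure U2) y by []; rewrite U1c2.
      have nU2 : ~ U2 y by move=> U2y; have : (U2 `&` closure U1) y by []; rewrite U2c1.
      have Fy : F y by split => // -[].
      by have : (P `&` Q) y by []; rewrite PQ.
    + by apply: nYy; apply: PY.
    + have Fy := YF y Yy.
      by have : (Y `&` Q) y by []; rewrite YQ.
    + by [].
exists (connected_component K z); split.
- split; first by exists z => //; case: Pz => -[].
  split.
  + exists z; split; first by apply: connected_component_refl; case: Pz => -[].
    rewrite /boundary intU1; split; first by case: Pz.
    by case: Pz => -[_ Kz] _ U1z; apply: Kz; left.
  + exists w; split.
      apply: (connected_component_max D0z) => // y /D0F []. done.
    rewrite /boundary intU2; split; first by case: Qw.
    by case: Qw => -[_ Kw] _ U2w; apply: Kw; right.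
- have Cz : C z by case: Pz => -[].
  rewrite CE (same_connected_component (_ : connected_component K' x z)); last by rewrite -CE.
  apply: connected_component_max.
  + by apply: connected_component_refl; case: Pz => -[].
  + by move=> y /connected_component_sub /KK'.
  + exact: component_connected.
Qed.

End S.

Theorem lemma4p2 (R : realType) (T : metricType R) (n : nat) (U1 U2 : set T) :
  compact [set: T] -> open U1 -> open U2 -> U1 `&` U2 = set0 ->
  bridging_components (~` (U1 `|` U2)) U1 U2 #= `I_n ->
  forall W1 W2 : set T, open W1 -> open W2 -> W1 `<=` U1 -> W2 `<=` U2 ->
  bridging_components (~` (W1 `|` W2)) W1 W2 #<= `I_n.
Proof.
move=> cT oU1 oU2 U12 HU W1 W2 oW1 oW2 WU1 WU2.
have hT : hausdorff_space T := @metric_hausdorff R T.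
set BW := bridging_components (~` (W1 `|` W2)) W1 W2.
set BU := bridging_components (~` (U1 `|` U2)) U1 U2.
have Hg : forall C, exists D, BW C -> BU D /\ D `<=` C.
  move=> C; have [BC|nBC] := pselect (BW C).
    have [D HD] := bridge_sub hT cT oU1 oU2 U12 oW1 oW2 WU1 WU2 BC.
    by exists D.
  by exists set0.
have [g Hg'] := choice Hg.
have inj : {in BW &, injective g}.
  move=> C1 C2; rewrite !in_setE => B1 B2 e.
  have [[[y _ _] [[z [gz _]] _]] s1] := Hg' C1 B1.
  have [_ s2] := Hg' C2 B2.
  have z1 : C1 z by exact: s1.
  have z2 : C2 z by apply: s2; rewrite -e.
  case: B1 => -[x1 _ E1] _; case: B2 => -[x2 _ E2] _.
  rewrite E1 E2 in z1 z2 *.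
  by rewrite (same_connected_component z1) (same_connected_component z2).
apply: (@card_le_trans _ _ _ (g @` BW)).
  by have := inj_card_eq inj; rewrite card_eq_sym card_eq_le => /andP [].
apply: (@card_le_trans _ _ _ BU).
  apply: subset_card_le => _ [C BC <-]; by have [] := Hg' C BC.
by move: HU; rewrite card_eq_le => /andP [].
Qed.
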